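(* Any profinite minimal action $\Gamma\curvearrowright X$ of a countable group on a zero-dimensional compact metric space $X$ has comparison.
   Context: An action $\Gamma\curvearrowright X$ on a zero-dimensional compact metric space is profinite if the orbits of the induced action of $\Gamma$ on the set $\mathrm{Clo}(X)$ of clopen subsets of $X$ are all finite; it is minimal if every orbit in $X$ is dense. Let $\mathrm{Prob}_\Gamma(X)$ denote the set of $\Gamma$-invariant Borel probability measures on $X$. The action has comparison if for all nonempty clopen sets $A,B\subseteq X$ with $\mu(A)<\mu(B)$ for all $\mu\in\mathrm{Prob}_\Gamma(X)$, there exist a partition $A=\bigsqcup_{i=1}^n C_i$ into clopen sets and elements $\gamma_1,\dots,\gamma_n\in\Gamma$ such that the sets $\gamma_iC_i$ ($1\le i\le n$) are pairwise disjoint subsets of $B$. *)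

(* Defs.v *)
From HB Require Import structures.
From mathcomp Require Import all_boot all_order all_algebra.
From mathcomp Require Import all_classical all_reals all_analysis.
From mathcomp Require monoid.

Set Implicit Arguments.
Unset Strict Implicit.
Unset Printing Implicit Defensive.

Import Order.TTheory GRing.Theory Num.Theory.
Local Open Scope classical_set_scope.
Local Open Scope ring_scope.

Definition Borel (X : ptopologicalType) := g_sigma_algebraType (@open X).

Definition continuous_action (G : monoid.Group.Exports.groupType) (X : topologicalType)
  (a : G -> X -> X) : Prop :=
  [/\ (forall x, a monoid.one x = x),
      (forall g h x, a (monoid.mul g h) x = a g (a h x)) &
      (forall g, continuous (a g))].

Definition profinite_action (G : monoid.Group.Exports.groupType) (X : topologicalType)
  (a : G -> X -> X) : Prop :=
  forall A : set X, clopen A -> finite_set [set a g @` A | g in [set: G]].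

Definition minimal_action (G : monoid.Group.Exports.groupType) (X : topologicalType)
  (a : G -> X -> X) : Prop :=
  forall x : X, closure [set a g x | g in [set: G]] = [set: X].

Definition invariant_prob (R : realType) (G : monoid.Group.Exports.groupType)
  (X : ptopologicalType) (a : G -> X -> X) (mu : probability (Borel X) R) : Prop :=
  forall (g : G) (A : set (Borel X)), measurable A ->
    mu (a g @^-1` A) = mu A.

Definition has_comparison (R : realType) (G : monoid.Group.Exports.groupType)
  (X : ptopologicalType) (a : G -> X -> X) : Prop :=
  forall A B : set X, clopen A -> clopen B -> A !=set0 -> B !=set0 ->
    (forall mu : probability (Borel X) R, invariant_prob a mu ->
       (mu (A : set (Borel X)) < mu (B : set (Borel X)))%E) ->
    exists (n : nat) (C : 'I_n -> set X) (gam : 'I_n -> G),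
      [/\ (forall i, clopen (C i)),
          (forall i j, i != j -> C i `&` C j = set0),
          A = \bigcup_(i in [set: 'I_n]) C i,
          (forall i j, i != j -> a (gam i) @` C i `&` a (gam j) @` C j = set0) &
          (forall i, a (gam i) @` C i `<=` B)].

(* Main.v *)
Require Import Defs.
From HB Require Import structures.
From mathcomp Require Import all_boot all_order all_algebra.
From mathcomp Require Import all_classical all_reals all_analysis.
From mathcomp Require monoid.
From mathcomp Require Import finmap.
Import Order.TTheory GRing.Theory Num.Theory.
Local Open Scope classical_set_scope.
Local Open Scope ring_scope.
Set Implicit Arguments. Unset Strict Implicit. Unset Printing Implicit Defensive.

Section Act.
Variables (G : monoid.Group.Exports.groupType) (X : topologicalType) (a : G -> X -> X).
Hypothesis ca : continuous_action a.

Lemma aK g x : a (monoid.inv g) (a g x) = x.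
Proof. by case: ca => h1 hM _; rewrite -hM monoid.mulVg h1. Qed.
Lemma aKV g x : a g (a (monoid.inv g) x) = x.
Proof. by case: ca => h1 hM _; rewrite -hM monoid.mulgV h1. Qed.
Lemma a_inj g : injective (a g).
Proof. by move=> x y /(congr1 (a (monoid.inv g))); rewrite !aK. Qed.
Lemma imageE g (S : set X) : a g @` S = a (monoid.inv g) @^-1` S.
Proof.
apply/seteqP; split=> [_ [y Sy <-]|y Sy]; first by rewrite /preimage/= aK.
by exists (a (monoid.inv g) y) => //; rewrite aKV.
Qed.
Lemma imageM g h (S : set X) : a g @` (a h @` S) = a (monoid.mul g h) @` S.
Proof.
case: ca => _ hM _; apply/seteqP; split=> [_ [_ [x Sx <-] <-]|_ [x Sx <-]].
  by exists x => //; rewrite hM.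
by exists (a h x); [exists x|rewrite hM].
Qed.
Lemma image1 (S : set X) : a monoid.one @` S = S.
Proof.
case: ca => h1 _ _; apply/seteqP; split=> [_ [x Sx <-]|x Sx]; first by rewrite h1.
by exists x => //; rewrite h1.
Qed.
Lemma image_inj g : injective (fun S : set X => a g @` S).
Proof.
move=> S T /= /(congr1 (fun S => a (monoid.inv g) @` S)).
by rewrite !imageM monoid.mulVg !image1.
Qed.
Lemma imageT g : a g @` [set: X] = [set: X].
Proof. by rewrite imageE preimage_setT. Qed.
Lemma image_clopen g (S : set X) : clopen S -> clopen (a g @` S).
Proof.
case: ca => _ _ hc [oS cS]; rewrite imageE; split.
  by apply: open_comp => // x _; apply: hc.
by apply: closed_comp => // x _; apply: hc.
Qed.
Lemma imageI g (S T : set X) : a g @` (S `&` T) = a g @` S `&` a g @` T.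
Proof. by rewrite !imageE preimage_setI. Qed.
Lemma imageU g (S T : set X) : a g @` (S `|` T) = a g @` S `|` a g @` T.
Proof. by rewrite !imageE preimage_setU. Qed.
Lemma imageC g (S : set X) : a g @` (~` S) = ~` (a g @` S).
Proof. by rewrite !imageE preimage_setC. Qed.

Definition Orb (C : set X) : set (set X) := [set a g @` C | g in [set: G]].

Lemma Orb_image g C : Orb (a g @` C) = Orb C.
Proof.
apply/seteqP; split=> _ [h _ <-].
  by rewrite imageM; exists (monoid.mul h g).
exists (monoid.mul h (monoid.inv g)) => //.
by rewrite imageM -monoid.mulgA monoid.mulVg monoid.mulg1.
Qed.
End Act.
Section Ratio.
Variables (R : realType) (G : monoid.Group.Exports.groupType) (X : topologicalType) (a : G -> X -> X).
Hypothesis ca : continuous_action a.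

Lemma ratio (T : choiceType) (act : G -> T -> T) (e0 : T) (pi : T -> set X)
  (w : set X -> R) :
  (forall t, act monoid.one t = t) ->
  (forall g h t, act (monoid.mul g h) t = act g (act h t)) ->
  (forall g t, pi (act g t) = a g @` pi t) ->
  finite_set [set act g e0 | g in [set: G]] ->
  (\sum_(t \in [set act g e0 | g in [set: G]]) w (pi t)) /
    (\sum_(t \in [set act g e0 | g in [set: G]]) (1 : R)) =
  (\sum_(D \in Orb a (pi e0)) w D) / (\sum_(D \in Orb a (pi e0)) (1:R)).
Proof.
move=> act1 actM piact.
set E := [set act g e0 | g in [set: G]] => finE.
have OE : Orb a (pi e0) = pi @` E.
  apply/seteqP; split=> [_ [g _ <-]|_ [_ [g _ <-] <-]].
    by exists (act g e0); [exists g|rewrite piact].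
  by exists g => //; rewrite piact.
have finO : finite_set (Orb a (pi e0)) by rewrite OE; exact: finite_image.
set f := \sum_(t \in E) ((pi t == pi e0)%:R : R).
have actK g t : act (monoid.inv g) (act g t) = t.
  by rewrite -actM monoid.mulVg act1.
have bij g : set_bij E E (act g).
  split.
  - by move=> _ [h _ <-]; exists (monoid.mul g h) => //; rewrite actM.
  - by move=> x y _ _ /(congr1 (act (monoid.inv g))); rewrite !actK.
  - move=> _ [h _ <-]; exists (act (monoid.inv g) (act h e0)).
      by exists (monoid.mul (monoid.inv g) h) => //; rewrite actM.
    by rewrite -actM monoid.mulgV act1.
have fib D : Orb a (pi e0) D -> \sum_(t \in E) ((pi t == D)%:R : R) = f.
  rewrite OE => -[_ [g _ <-] <-].
  rewrite /f (reindex_fsbig (act g) E E) //.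
  apply: eq_fsbigr => t _; rewrite !piact.
  by rewrite (inj_eq (image_inj ca (g:=g))).
have key (v : set X -> R) :
    \sum_(t \in E) v (pi t) = (\sum_(D \in Orb a (pi e0)) v D) * f.
  transitivity (\sum_(t \in E) \sum_(D \in Orb a (pi e0)) ((pi t == D)%:R * v D)).
    apply: eq_fsbigr => t /set_mem Et.
    have Ot : Orb a (pi e0) (pi t).
      by rewrite OE; exists t.
    rewrite (fsbigD1 (pi t)) //= eqxx mul1r.
    rewrite [X in _ + X]fsbig1 ?addr0 // => D [_ /eqP].
    by rewrite eq_sym => /negbTE ->; rewrite mul0r.
  rewrite exchange_fsbig // mulr_fsuml; apply: eq_fsbigr => D /set_mem OD.
  by rewrite -mulr_fsuml fib // mulrC.
have fpos : 0 < f.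
  rewrite /f (fsbigD1 e0) //; last by exists monoid.one.
  rewrite eqxx; apply: (lt_le_trans ltr01); rewrite lerDl.
  by apply: fsumr_ge0 => t _; case: (pi t == pi e0).
have h1 := key (fun _ => 1).
rewrite key /= h1 -mulf_div divff ?mulr1 //.
by rewrite gt_eqF.
Qed.
End Ratio.
Section Nu.
Variables (R : realType) (G : monoid.Group.Exports.groupType) (X : topologicalType) (a : G -> X -> X).
Hypothesis ca : continuous_action a.
Variable x0 : X.

Definition nuR (C : set X) : R :=
  (\sum_(D \in Orb a C) ((x0 \in D)%:R : R)) / (\sum_(D \in Orb a C) (1:R)).

Lemma nuR_ge0 C : 0 <= nuR C.
Proof.
by apply: divr_ge0; apply: fsumr_ge0 => D _ //; case: (x0 \in D).
Qed.

Lemma nuR_image g C : nuR (a g @` C) = nuR C.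
Proof. by rewrite /nuR Orb_image. Qed.

Lemma Orb_T : Orb a [set: X] = [set [set: X]].
Proof.
apply/seteqP; split=> [_ [g _ <-]|_ ->]; first by rewrite /= imageT.
by exists monoid.one => //; rewrite imageT.
Qed.

Lemma Orb_0 : Orb a set0 = [set set0].
Proof.
apply/seteqP; split=> [_ [g _ <-]|_ ->]; first by rewrite /= image_set0.
by exists monoid.one => //; rewrite image_set0.
Qed.

Lemma nuR_T : nuR [set: X] = 1.
Proof. by rewrite /nuR Orb_T !fsbig_set1 in_setT divr1. Qed.

Lemma nuR_0 : nuR set0 = 0.
Proof. by rewrite /nuR Orb_0 !fsbig_set1 in_set0 mul0r. Qed.

Lemma nuR_U C D : finite_set (Orb a C) -> finite_set (Orb a D) ->
  C `&` D = set0 -> nuR (C `|` D) = nuR C + nuR D.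
Proof.
move=> fC fD CD.
pose act g (p : set X * set X) := (a g @` p.1, a g @` p.2).
have act1 t : act monoid.one t = t by case: t => ? ?; rewrite /act !image1.
have actM g h t : act (monoid.mul g h) t = act g (act h t).
  by case: t => ? ?; rewrite /act /= !imageM.
set E := [set act g (C, D) | g in [set: G]].
have finE : finite_set E.
  apply: (sub_finite_set _ (finite_setX fC fD)) => _ [g _ <-].
  by split; exists g.
pose w (S : set X) : R := (x0 \in S)%:R.
have r1 := ratio ca (pi := fst) w act1 actM (fun g t => erefl) finE.
have r2 := ratio ca (pi := snd) w act1 actM (fun g t => erefl) finE.
have r3 := ratio ca (pi := fun p => p.1 `|` p.2) w act1 actM
  (fun g t => esym (imageU ca g t.1 t.2)) finE.
rewrite /nuR -r1 -r2 -r3 /= -mulrDl -fsbig_split //.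
congr (_ / _); apply: eq_fsbigr => _ /set_mem [g _ <-].
rewrite /w /= in_setU.
have : ~ (x0 \in a g @` C /\ x0 \in a g @` D).
  case=> /set_mem h1 /set_mem h2.
  have : (a g @` C `&` a g @` D) x0 by [].
  by rewrite -(imageI ca) CD image_set0.
have H (b1 b2 : bool) : ~ (b1 /\ b2) -> (b1 || b2)%:R = b1%:R + b2%:R :> R.
  by case: b1; case: b2 => //= h; rewrite ?addr0 ?add0r //; case: h.
exact: H.
Qed.
End Nu.
Section Add.
Variables (R : realType) (G : monoid.Group.Exports.groupType) (X : ptopologicalType) (a : G -> X -> X).
Hypothesis ca : continuous_action a.
Hypothesis prof : profinite_action a.
Hypothesis hcomp : compact [set: X].
Variable x0 : X.

Lemma bigU_mem (F : nat -> set X) N x :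
  (\big[setU/set0]_(0 <= i < N) F i) x <-> exists2 i, (i < N)%N & F i x.
Proof.
elim: N => [|N IH]; first by rewrite big_nil; split=> // -[].
rewrite big_nat_recr //=; split.
  by case=> [/IH [i iN Fi]|FN]; [exists i => //; rewrite ltnS ltnW|exists N].
move=> [i]; rewrite ltnS leq_eqVlt => /orP[/eqP -> FN|iN Fi]; first by right.
by left; apply/IH; exists i.
Qed.

Lemma bigU_clopen (F : nat -> set X) N : (forall i, clopen (F i)) ->
  clopen (\big[setU/set0]_(0 <= i < N) F i).
Proof.
move=> cF; apply: (big_ind (@clopen X)) => //; first exact: clopen0.
by move=> ? ? ? ?; apply: clopenU.
Qed.

Lemma nuR_bigU (F : nat -> set X) N : (forall i, clopen (F i)) ->
  trivIset [set: nat] F ->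
  nuR R a x0 (\big[setU/set0]_(0 <= i < N) F i) = \sum_(0 <= i < N) nuR R a x0 (F i).
Proof.
move=> cF tF; elim: N => [|N IH]; first by rewrite !big_nil nuR_0.
rewrite !big_nat_recr //= nuR_U //; first by rewrite IH.
- by apply: prof; apply: bigU_clopen.
- by apply: prof.
apply/seteqP; split=> // x [/bigU_mem [i iN Fi] FN].
have := tF i N I I (ex_intro _ x (conj Fi FN)).
by move=> ie; rewrite ie ltnn in iN.
Qed.

Lemma nuR_ssa (F : nat -> set X) : (forall i, clopen (F i)) ->
  trivIset [set: nat] F -> clopen (\bigcup_n F n) ->
  ((fun n => \sum_(0 <= i < n) (nuR R a x0 (F i))%:E) @ \oo -->
    (nuR R a x0 (\bigcup_n F n))%:E)%E.
Proof.
move=> cF tF cU.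
have cmpU : compact (\bigcup_n F n).
  by apply: (subclosed_compact _ hcomp) => //; case: cU.
move: cmpU; rewrite compact_cover => /(_ nat setT F) [].
- by move=> i _; case: (cF i).
- by move=> x [i _ Fi]; exists i.
move=> D' _ cov.
pose N := (\max_(i <- D') i).+1.
have DN j : j \in D' -> (j < N)%N by move=> jD; rewrite ltnS (leq_bigmax_seq (F:=id) _ jD).
have F0 i : (N <= i)%N -> F i = set0.
  move=> Ni; apply/seteqP; split=> // x Fix.
  have [j /= jD Fjx] := cov x (ex_intro2 _ _ i I Fix).
  have := tF i j I I (ex_intro _ x (conj Fix Fjx)) => ij.
  by move: (DN j jD); rewrite -ij ltnNge Ni.
have UE : \bigcup_n F n = \big[setU/set0]_(0 <= i < N) F i.
  apply/seteqP; split=> x.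
    move=> /cov [j /= jD Fjx]; apply/bigU_mem; exists j => //; exact: DN.
  by move=> /bigU_mem [i _ Fi]; exists i.
apply: cvg_near_cst; near=> n.
have Nn : (N <= n)%N by near: n; exact: nbhs_infty_ge.
rewrite (big_cat_nat (leq0n N) Nn) /= [X in (_ + X)%E]big_nat_cond.
rewrite [X in (_ + X)%E]big1 ?adde0; last first.
  by move=> i /andP[/andP[Ni _] _]; rewrite F0 // nuR_0.
by rewrite sumEFin UE nuR_bigU.
Unshelve. all: by end_near.
Qed.
End Add.
Section Topo.
Variables (R : realType) (X : pseudoPMetricType R).
Hypotheses (haus : hausdorff_space X) (hcomp : compact [set: X])
  (zd : zero_dimensional X).

Lemma clopen_base (x : X) (U : set X) : open U -> U x ->
  exists2 D, clopen D /\ D x & D `<=` U.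
Proof.
move=> oU Ux.
have := @zero_dimensional_cvg X x haus zd hcomp.
move=> /(_ U (open_nbhs_nbhs (conj oU Ux))) [D [Dx cD] DU].
by exists D.
Qed.

Lemma open_sub_clopen : <<s @open X >> `<=` <<s @clopen X >>.
Proof.
apply: smallest_sub; first exact: smallest_sigma_algebra.
move=> U oU.
have [f] := clopen_surj hcomp.
pose h n := if `[< f n `<=` U >] then f n else set0.
have -> : U = \bigcup_n h n.
  apply/seteqP; split=> [x Ux|x [n _]]; last first.
    by rewrite /h; case: asboolP => // fU /fU.
  have [D [cD Dx] DU] := clopen_base oU Ux.
  have [n _ fnD] := @surj _ _ _ _ f D cD.
  exists n => //; rewrite /h; case: asboolP => [_|nfU]; first by rewrite fnD.
  by case: nfU; rewrite fnD.
apply: sigma_algebra_bigcup => n; rewrite /h; case: asboolP => _.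
  have cfn : clopen (f n) by apply: funS.
  exact: (sub_sigma_algebra cfn).
exact: sigma_algebra0.
Qed.
End Topo.
Section Atoms.
Variables (G : monoid.Group.Exports.groupType) (X : ptopologicalType) (a : G -> X -> X).
Hypotheses (ca : continuous_action a) (hcomp : compact [set: X]) (mini : minimal_action a).
Variable F : set (set X).
Hypotheses (finF : finite_set F) (cF : forall S, F S -> clopen S)
  (invF : forall g S, F S -> F (a g @` S)).

Definition atom (x : X) : set X := [set y | forall S, F S -> (S x <-> S y)].

Lemma atom_refl x : atom x x.
Proof. by []. Qed.

Lemma atom_eq x y : atom x y -> atom y = atom x.
Proof.
move=> xy; apply/seteqP; split=> z hz S FS.
  by rewrite (xy S FS); exact: hz.
by rewrite -(xy S FS); exact: hz.
Qed.

Lemma atom_sub x S : F S -> S x -> atom x `<=` S.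
Proof. by move=> FS Sx y /(_ S FS) /iffLR; apply. Qed.

Lemma atom_disj x y : atom x `&` atom y !=set0 -> atom x = atom y.
Proof. by case=> z [/atom_eq h1 /atom_eq h2]; rewrite -h1 h2. Qed.

Lemma atom_clopen x : clopen (atom x).
Proof.
have -> : atom x = \bigcap_(S in F) [set y | S x <-> S y].
  by apply/seteqP; split=> y hy S FS; apply: hy.
rewrite -bigsetI_fset_set // big_seq.
apply: (big_ind (@clopen X)); [exact: clopenT|by move=> ? ? ? ?; apply: clopenI|].
move=> S; rewrite (in_fset_set finF) => /set_mem FS.
have [Sx|nSx] := pselect (S x).
  have -> : [set y | S x <-> S y] = S.
    by apply/seteqP; split=> y; [move=> [/(_ Sx)]|move=> Sy; split].
  exact: cF.
have -> : [set y | S x <-> S y] = ~` S.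
  by apply/seteqP; split=> y; [move=> [_ h] /h|move=> nSy; split].
exact: (@clopenC X S S (cF FS)).
Qed.

Lemma atom_image g x : a g @` atom x = atom (a g x).
Proof.
apply/seteqP; split.
- move=> _ [y hy <-] S FS.
  have := hy _ (invF (monoid.inv g) FS).
  by rewrite !(imageE ca) monoid.invgK.
- move=> z hz; exists (a (monoid.inv g) z); last by rewrite (aKV ca).
  move=> S FS; have := hz _ (invF g FS).
  by rewrite !(imageE ca) /preimage /= (aK ca).
Qed.

Definition AT := [set atom x | x in [set: X]].

Lemma AT_finite : finite_set AT.
Proof.
have := hcomp; rewrite compact_cover => /(_ X setT atom) [].
- by move=> x _; case: (atom_clopen x).
- by move=> x _; exists x.
move=> D' _ cov.
apply: (sub_finite_set _ (finite_image atom (finite_fset D'))).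
move=> _ [x _ <-]; have [d /= Dd dx] := cov x I.
by exists d => //; rewrite (atom_eq dx).
Qed.

Lemma atom_trans x y : exists g, a g @` atom x = atom y.
Proof.
have cl : closure [set a g x | g in [set: G]] y by rewrite mini.
move: cl; rewrite closureEnbhs => /(_ [set a g x | g in [set: G]] (atom y)) [] //.
  apply: open_nbhs_nbhs; split; last exact: atom_refl.
  by case: (atom_clopen y).
move=> _ [[g _ <-] hy]; exists g.
by rewrite atom_image (atom_eq hy).
Qed.
End Atoms.
Section Meas.
Variables (R : realType) (G : monoid.Group.Exports.groupType) (X : pseudoPMetricType R)
  (a : G -> X -> X).
Hypotheses (ca : continuous_action a) (prof : profinite_action a)
  (haus : hausdorff_space X) (hcomp : compact [set: X]) (zd : zero_dimensional X).
Variable x0 : X.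

Definition CX : Type := X.
HB.instance Definition _ := Pointed.on CX.
HB.instance Definition _ := @isAlgebraOfSets.Build default_measure_display CX
  (@clopen X) clopen0 (@clopenU X) (fun A => @clopenC X A A).

Definition nuE (S : set CX) : \bar R := (nuR R a x0 S)%:E.

Lemma nuE0 : nuE set0 = 0%E.
Proof. by rewrite /nuE nuR_0. Qed.
Lemma nuE_ge0 S : (0 <= nuE S)%E.
Proof. by rewrite /nuE lee_fin nuR_ge0. Qed.
Lemma nuE_ssa : semi_sigma_additive nuE.
Proof.
move=> F mF tF mU.
exact: (nuR_ssa (x0:=x0) ca prof hcomp mF tF mU).
Qed.

HB.instance Definition _ := isMeasure.Build _ CX R nuE nuE0 nuE_ge0 nuE_ssa.

Definition ext := measure_extension nuE.

Definition muB (S : set (Borel X)) : \bar R := ext S.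

Lemma sub_meas (S : set (Borel X)) : measurable S ->
  (@measurable _ CX).-sigma.-measurable S.
Proof. exact: open_sub_clopen. Qed.

Lemma muB0 : muB set0 = 0%E.
Proof. exact: measure0. Qed.
Lemma muB_ge0 S : (0 <= muB S)%E.
Proof. exact: measure_ge0. Qed.
Lemma muB_ssa : semi_sigma_additive muB.
Proof.
move=> F mF tF mU.
apply: (@measure_semi_sigma_additive _ _ _ ext F) => //.
- by move=> i; apply: sub_meas.
- by apply: sub_meas.
Qed.

HB.instance Definition _ := isMeasure.Build _ (Borel X) R muB muB0 muB_ge0 muB_ssa.

Lemma muB_clopen (S : set X) : clopen S -> muB S = nuE S.
Proof. by move=> cS; rewrite /muB /ext /measure_extension measurable_mu_extE. Qed.

Lemma muBT : muB setT = 1%E.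
Proof.
rewrite muB_clopen; first exact: (congr1 EFin (@nuR_T R _ _ a ca x0)).
exact: (@clopenT X).
Qed.

HB.instance Definition _ := Measure_isProbability.Build _ (Borel X) R muB muBT.

Lemma ext_inv g (S : set X) : ext (a g @^-1` S) = ext S.
Proof.
rewrite /ext /measure_extension /mu_ext; congr ereal_inf.
apply/seteqP; split=> _ [F [mF cF] <-].
- exists (fun k => a g @` F k).
    rewrite /measurable_cover /=; split=> [k|y Sy]; first by have := mF k; change (clopen (F k) -> clopen (a g @` F k)); exact: image_clopen.
    have : (a g @^-1` S) (a (monoid.inv g) y) by rewrite /preimage/= aKV.
    by move=> /cF [k _ Fk]; exists k => //; exists (a (monoid.inv g) y) => //; rewrite aKV.
  by apply: eq_eseriesr => k _; exact: (congr1 EFin (@nuR_image R _ _ a ca x0 _ _)).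
- exists (fun k => a (monoid.inv g) @` F k).
    rewrite /measurable_cover /=; split=> [k|y Sy]; first by have := mF k; change (clopen (F k) -> clopen (a (monoid.inv g) @` F k)); exact: image_clopen.
    have [k _ Fk] := cF _ Sy.
    by exists k => //; exists (a g y) => //; rewrite aK.
  by apply: eq_eseriesr => k _; exact: (congr1 EFin (@nuR_image R _ _ a ca x0 _ _)).
Qed.

Lemma muB_inv : invariant_prob a muB.
Proof. by move=> g S _; exact: ext_inv. Qed.
Hypothesis mini : minimal_action a.

Lemma sum_const_seq (V : nmodType) (T : Type) (s : seq T) (r : V) :
  \sum_(i <- s) r = r *+ size s.
Proof. by elim: s => [|x s IH]; rewrite ?big_nil ?big_cons ?IH ?mulrS. Qed.

Lemma sum_constE (T : Type) (s : seq T) (r : R) :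
  \sum_(i <- s) (r%:E) = (r *+ size s)%:E.
Proof. by elim: s => [|x s IH]; rewrite ?big_nil ?big_cons ?IH ?mulrS ?EFinD. Qed.

Lemma comparison_main : has_comparison R a.
Proof.
move=> A B cA cB _ _ hmu.
have hlt := hmu muB muB_inv.
pose F := Orb a A `|` Orb a B.
have finF : finite_set F by rewrite /F finite_setU; split; apply: prof.
have cF S : F S -> clopen S by case=> -[g _ <-]; apply: image_clopen.
have invF g S : F S -> F (a g @` S).
  by case=> -[h _ <-]; [left|right]; exists (monoid.mul g h) => //; rewrite imageM.
have FA : F A by left; exists monoid.one => //; rewrite image1.
have FB : F B by right; exists monoid.one => //; rewrite image1.
have finAT := AT_finite hcomp finF cF.
have clP P : AT F P -> clopen P by case=> x _ <-; exact: atom_clopen.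
have mP P : AT F P -> measurable (P : set (Borel X)).
  by move=> /clP [oP _]; apply: sub_sigma_algebra.
pose c := muB (atom F x0).
have muP P : AT F P -> muB P = c.
  case=> x _ <-; have [g <-] := atom_trans ca mini finF cF invF x0 x.
  rewrite (imageE ca); apply: muB_inv; apply: mP; by exists x0.
pose AA := [set P | AT F P /\ P `<=` A].
pose BB := [set P | AT F P /\ P `<=` B].
have finAA : finite_set AA by apply: sub_finite_set finAT => P [].
have finBB : finite_set BB by apply: sub_finite_set finAT => P [].
have trAT (Q : set (set X)) : Q `<=` AT F -> trivIset Q id.
  move=> QAT P P' /QAT [x _ <-] /QAT [y _ <-] /= h.
  exact: atom_disj h.
have decomp S (FS : F S) : S = \big[setU/set0]_(P \in [set P | AT F P /\ P `<=` S]) P.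
  rewrite fsbig_setU; last by apply: sub_finite_set finAT => P [].
  apply/seteqP; split=> [x Sx|x [P [_ PS] Px]]; last exact: PS.
  by exists (atom F x); [split; [exists x|exact: atom_sub]|exact: atom_refl].
have sumS S (FS : F S) : muB S = \sum_(P \in [set P | AT F P /\ P `<=` S]) c.
  rewrite {1}(decomp S FS) measure_fsbig //.
  - by apply: eq_fsbigr => P /set_mem [/muP].
  - by apply: sub_finite_set finAT => P [].
  - by move=> P [/mP].
  - by apply: trAT => P [].
have {}hlt : (muB A < muB B)%E := hlt.
have e1 : muB A = \sum_(P \in AA) c := sumS A FA.
have e2 : muB B = \sum_(P \in BB) c := sumS B FB.
move: hlt; rewrite e1 e2.
rewrite !fsbig_finite // /c muB_clopen; last exact: atom_clopen.
rewrite /nuE !sum_constE lte_fin.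
set sA := fset_set AA; set sB := fset_set BB; set r := nuR R a x0 (atom F x0).
move=> hlt.
have nAB : (size sA < size sB)%N.
  rewrite ltnNge; apply/negP => hle.
  have r0 : 0 <= r by exact: nuR_ge0.
  have : r *+ (size sB) <= r *+ (size sA).
    rewrite -(mulr_natr r (size sB)) -(mulr_natr r (size sA)).
    by apply: ler_wpM2l => //; rewrite ler_nat.
  by rewrite leNgt hlt.
have memA i : (i < size sA)%N -> AA (nth set0 sA i).
  by move=> /(mem_nth set0); rewrite (in_fset_set finAA) => /set_mem.
have memB i : (i < size sB)%N -> BB (nth set0 sB i).
  by move=> /(mem_nth set0); rewrite (in_fset_set finBB) => /set_mem.
have ex (i : 'I_(size sA)) : exists g, a g @` nth set0 sA i = nth set0 sB i.
  have [[x _ <-] _] := memA i (ltn_ord i).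
  have [[y _ <-] _] := memB i (ltn_trans (ltn_ord i) nAB).
  exact: (atom_trans ca mini finF cF invF x y).
have [gam hgam] := choice ex.
exists (size sA), (fun i => nth set0 sA i), gam; split.
- by move=> i; have [/clP] := memA i (ltn_ord i).
- move=> i j ij; apply/seteqP; split=> // z hz.
  have [[x _ eX] _] := memA i (ltn_ord i); have [[y _ ey] _] := memA j (ltn_ord j).
  have : nth set0 sA i = nth set0 sA j.
    by rewrite -eX -ey; apply: atom_disj; exists z; rewrite eX ey.
  move/eqP; rewrite nth_uniq ?ltn_ord ?fset_uniq // => /eqP /val_inj ijE.
  by rewrite ijE eqxx in ij.
- apply/seteqP; split=> [x Ax|x [i _ hi]]; last first.
    by have [_ /(_ x hi)] := memA i (ltn_ord i).
  have AAx : atom F x \in sA.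
    rewrite (in_fset_set finAA); apply/mem_set; split; [by exists x|exact: atom_sub].
  have hi : (index (atom F x) sA < size sA)%N by rewrite index_mem.
  exists (Ordinal hi) => //=.
  by rewrite nth_index //; exact: atom_refl.
- move=> i j ij; rewrite !hgam; apply/seteqP; split=> // z hz.
  have ltiB := ltn_trans (ltn_ord i) nAB; have ltjB := ltn_trans (ltn_ord j) nAB.
  have [[x _ eX] _] := memB i ltiB; have [[y _ ey] _] := memB j ltjB.
  have : nth set0 sB i = nth set0 sB j.
    by rewrite -eX -ey; apply: atom_disj; exists z; rewrite eX ey.
  move/eqP; rewrite nth_uniq ?fset_uniq // => /eqP /val_inj ijE.
  by rewrite ijE eqxx in ij.
- by move=> i; rewrite hgam; have [_] := memB i (ltn_trans (ltn_ord i) nAB).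
Qed.
End Meas.

Local Open Scope classical_set_scope.

Theorem lemma2p4 (R : realType) (G : monoid.Group.Exports.groupType) (X : pseudoPMetricType R)
  (a : G -> X -> X) :
  countable [set: G] ->
  hausdorff_space X -> compact [set: X] -> zero_dimensional X ->
  continuous_action a -> profinite_action a -> minimal_action a ->
  has_comparison R a.
Proof.
move=> _ haus hcomp zd ca prof mini.
exact: (comparison_main ca prof haus hcomp zd point mini).
Qed.
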